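(* Let $F$ be a fixed real $3\times 3$ matrix of rank two. For a symmetric $3\times 3$ matrix $\omega^*$, define $$G(\omega^* ) = \frac{1}{2}\operatorname{tr}(F\omega^*F^{\mathrm T}\omega^* )\,F - F\omega^*F^{\mathrm T}\omega^*F.$$ Regard the nine entries $(G(\omega^* ))_{ij}$, $1\le i,j\le 3$, as polynomials in the six independent entries of $\omega^*$. Then at most three of these polynomials are linearly independent (over coefficients depending only on $F$). That is, the linear span of $\{(G(\omega^* ))_{ij}\}_{i,j=1}^{3}$ has dimension at most $3$.
   Context: In the paper's application, $F$ is a fundamental matrix and $\omega^* = KK^{\mathrm T}$ for an upper-triangular camera calibration matrix $K$. The equation $G(\omega^* ) = 0_{3\times 3}$ is then a system of self-calibration constraints on the entries of $\omega^*$. *)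

(* Defs.v *)
From HB Require Import structures.
From mathcomp Require Import all_boot all_order all_algebra.
Set Implicit Arguments. Unset Strict Implicit. Unset Printing Implicit Defensive.
Import Order.TTheory GRing.Theory Num.Theory.
Local Open Scope ring_scope.

Definition Gmap (R : realFieldType) (F w : 'M[R]_3) : 'M[R]_3 :=
  ((\tr (F *m w *m F^T *m w)) / 2%:R) *: F - F *m w *m F^T *m w *m F.

(* Main.v *)
Require Import Defs.
From HB Require Import structures.
From mathcomp Require Import all_boot all_order all_algebra.
From mathcomp Require Import ring lra.
Set Implicit Arguments. Unset Strict Implicit. Unset Printing Implicit Defensive.
Import Order.TTheory GRing.Theory Num.Theory.
Local Open Scope ring_scope.
Definition i0 : 'I_3 := @Ordinal 3 0 isT.
Definition i1 : 'I_3 := @Ordinal 3 1 isT.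
Definition i2 : 'I_3 := @Ordinal 3 2 isT.

Lemma sum3 (R : nmodType) (f : 'I_3 -> R) : \sum_(k < 3) f k = f i0 + f i1 + f i2.
Proof.
rewrite !big_ord_recr big_ord0 /= add0r.
by congr (f _ + f _ + f _); apply: val_inj.
Qed.

Lemma pidN (R : realFieldType) (Y : 'M[R]_3) i j :
  (pid_mx 2 *m Y *m pid_mx 2 : 'M[R]_3) i j =
  (if (i < 2)%N && (j < 2)%N then Y i j else 0).
Proof.
rewrite !mxE sum3 !mxE !sum3 !mxE.
case: i => [[|[|[|i]]] Hi] //; case: j => [[|[|[|j]]] Hj] //=;
rewrite /i0 /i1 /i2 /= ?(mul1r,mul0r,mulr1,mulr0,addr0,add0r) //;
by congr (Y _ _); apply: val_inj.
Qed.

Lemma Gent (R : realFieldType) (L U Y : 'M[R]_3) i j :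
  ((\tr ((pid_mx 2 : 'M[R]_3) *m Y *m (pid_mx 2 : 'M[R]_3)) / 2%:R) *: (L *m (pid_mx 2 : 'M[R]_3) *m U)
     - L *m ((pid_mx 2 : 'M[R]_3) *m Y *m (pid_mx 2 : 'M[R]_3)) *m U) i j =
  (Y i1 i1 - Y i0 i0) / 2%:R * (L i i0 * U i0 j - L i i1 * U i1 j)
  - Y i0 i1 * (L i i0 * U i1 j) - Y i1 i0 * (L i i1 * U i0 j).
Proof.
rewrite /mxtrace !(mxE, sum3) /i0 /i1 /i2 /=.
have h2 : (2%:R : R) != 0 by rewrite pnatr_eq0.
by field.
Qed.

Lemma Gform (R : realFieldType) (L U w : 'M[R]_3) :
  let D := (pid_mx 2 : 'M[R]_3) in
  let Y := U *m w *m U^T *m D *m L^T *m w *m L in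
  Gmap (L *m D *m U) w =
  (\tr (D *m Y *m D) / 2%:R) *: (L *m D *m U) - L *m (D *m Y *m D) *m U.
Proof.
move=> D Y.
have DD : D *m D = D by rewrite /D pid_mx_id.
have DT : D^T = D by rewrite /D tr_pid_mx.
rewrite /Gmap !trmx_mul DT.
congr (_ *: _ - _).
  congr (_ / _).
  rewrite [RHS]mxtrace_mulC [D *m (D *m Y)]mulmxA DD /Y !mulmxA [RHS]mxtrace_mulC !mulmxA.
  done.
by rewrite /Y !mulmxA.
Qed.

Theorem proposition3 (R : realFieldType) (F : 'M[R]_3) (hF : \rank F = 2%N) :
  forall p : 'I_4 -> 'I_3 * 'I_3,
  exists c : 'I_4 -> R,
    (exists k, c k != 0) /\
    forall w : 'M[R]_3, w^T = w ->
      \sum_(k < 4) c k * (Gmap F w) (p k).1 (p k).2 = 0.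
Proof.
move=> p.
have eF := mulmx_ebase F; rewrite hF in eF.
set L := col_ebase F in eF; set U := row_ebase F in eF.
pose M : 'M[R]_(4,3) := \matrix_(k, t)
  (let a := (p k).1 in let b := (p k).2 in
   if val t == 0%N then L a i0 * U i0 b - L a i1 * U i1 b
   else if val t == 1%N then L a i0 * U i1 b else L a i1 * U i0 b).
have key : forall w, exists h : 'I_3 -> R, forall k,
    (Gmap F w) (p k).1 (p k).2 = \sum_(t < 3) M k t * h t.
  move=> w.
  pose Y := U *m w *m U^T *m (pid_mx 2 : 'M[R]_3) *m L^T *m w *m L.
  exists (fun t : 'I_3 => if val t == 0%N then (Y i1 i1 - Y i0 i0) / 2%:R
                  else if val t == 1%N then - Y i0 i1 else - Y i1 i0) => k.
  rewrite -eF Gform Gent sum3 !mxE /=.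
  ring.
set K := kermx M.
have KM : K *m M = 0 := mulmx_ker M.
have rk : \rank K = (4 - \rank M)%N := mxrank_ker M.
clearbody K.
have K0 : K != 0.
  apply/eqP => HK; move: rk; rewrite HK mxrank0 => /esym/eqP.
  rewrite subn_eq0 => h; by have := leq_trans h (rank_leq_col M); rewrite ltnn.
have [[i j] Hij | H0] := pickP [pred ij : 'I_4 * 'I_4 | K ij.1 ij.2 != 0]; last first.
  exfalso; apply: (negP K0); apply/eqP/matrixP => i j; have := H0 (i, j); rewrite /= mxE.
  by move/negbFE/eqP.
exists (fun k => K i k); split; first by exists j.
move=> w _.
have cM : forall t, \sum_k K i k * M k t = 0.
  move=> t; have := congr1 (fun A : 'M[R]_(4,3) => A i t) KM.
  by rewrite !mxE.
have [h Hh] := key w.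
rewrite (eq_bigr (fun k => \sum_(t < 3) K i k * (M k t * h t))); last first.
  by move=> k _; rewrite Hh big_distrr.
rewrite exchange_big /=; apply: big1 => t _.
transitivity ((\sum_k K i k * M k t) * h t); last by rewrite cM mul0r.
by rewrite big_distrl; apply: eq_bigr => k _; rewrite mulrA.
Qed.
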